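(* There exist absolute constants $c_1,c_2>0$ such that for every $n\ge1$ and every boolean function $f:\{-1,1\}^n\to\{-1,1\}$, $$\mathrm{Ent}(f)\le c_1 I(f)+c_2\sum_{k=2}^{n} I_k(f)\log\frac{1}{I_k(f)},$$ with the convention $I_k(f)\log\frac{1}{I_k(f)}=0$ when $I_k(f)=0$ (i.e. the term for coordinate $k=1$ can be omitted).
   Context: Let $x$ be uniformly distributed on $\{-1,1\}^n$; $\mu_k$ flips the $k$-th coordinate. $I_k(f)=\mathbb{P}_x[f(x)\neq f(\mu_k(x))]$, $I(f)=\sum_k I_k(f)$, $\hat f(S)=\mathbb{E}_x[f(x)\prod_{k\in S}x_k]$ for $S\subseteq[n]$, and $\mathrm{Ent}(f)=\sum_{S\subseteq[n]}\hat f(S)^2\log_2\frac{1}{\hat f(S)^2}$ (terms with $\hat f(S)=0$ are $0$). *)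

(* Defs.v *)
From Stdlib Require Import Reals.
From mathcomp Require Import all_boot all_order all_algebra.
From mathcomp Require Import Rstruct.
Set Implicit Arguments. Unset Strict Implicit. Unset Printing Implicit Defensive.
Import Order.TTheory GRing.Theory Num.Theory.
Local Open Scope ring_scope.

(* The cube {-1,1}^n: a point is a boolean vector, coordinate k has value
   x_k = -1 if the bit is true and +1 if it is false. *)
Definition cube (n : nat) : finType := {ffun 'I_n -> bool}.

Definition coord (n : nat) (x : cube n) (k : 'I_n) : R :=
  if x k then -1 else 1.

Definition flip (n : nat) (k : 'I_n) (x : cube n) : cube n :=
  [ffun i => if i == k then ~~ x i else x i].

Definition is_boolean (n : nat) (f : cube n -> R) : Prop :=
  forall x, f x = 1 \/ f x = -1.

Definition Ex (n : nat) (g : cube n -> R) : R :=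
  (\sum_(x : cube n) g x) / (2 ^+ n).

Definition infl (n : nat) (f : cube n -> R) (k : 'I_n) : R :=
  Ex (fun x => if f x != f (flip k x) then 1 else 0).

Definition total_infl (n : nat) (f : cube n -> R) : R :=
  \sum_(k : 'I_n) infl f k.

Definition fourier (n : nat) (f : cube n -> R) (S : {set 'I_n}) : R :=
  Ex (fun x => f x * \prod_(k in S) coord x k).

Definition log2 (t : R) : R := (ln t / ln 2)%R.

Definition fourier_ent (n : nat) (f : cube n -> R) : R :=
  \sum_(S : {set 'I_n})
    (if fourier f S == 0 then 0
     else fourier f S ^+ 2 * log2 (1 / fourier f S ^+ 2)).

Definition xlog1x (t : R) : R := if t == 0 then 0 else t * log2 (1 / t).

(* Main.v *)
Require Import Defs.
From Stdlib Require Import Reals.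
From mathcomp Require Import all_boot all_order all_algebra.
From mathcomp Require Import Rstruct.
From mathcomp Require Import ring lra.
Import Order.TTheory GRing.Theory Num.Theory.
Local Open Scope ring_scope.
Set Implicit Arguments. Unset Strict Implicit. Unset Printing Implicit Defensive.
Notation coord := Defs.coord.
Notation flip := Defs.flip.

Lemma sum_prod_set (n : nat) (a b : 'I_n -> R) :
  \sum_(S : {set 'I_n}) \prod_(k : 'I_n) (if k \in S then a k else b k)
  = \prod_(k : 'I_n) (a k + b k).
Proof.
have -> : \prod_(k : 'I_n) (a k + b k) =
   \prod_(k : 'I_n) \sum_(j : bool) (if j then a k else b k).
  by apply: eq_bigr => k _; rewrite big_bool.
rewrite bigA_distr_bigA /=.
rewrite (reindex (fun g : {ffun 'I_n -> bool} => [set k | g k])) /=.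
  by apply: eq_bigr => g _; apply: eq_bigr => k _; rewrite inE.
exists (fun S : {set 'I_n} => [ffun k => k \in S]) => g _.
  by apply/ffunP => k; rewrite ffunE inE.
by apply/setP => k; rewrite inE ffunE.
Qed.

Lemma ExE n (g : cube n -> R) : Ex g = (\sum_x g x) / 2 ^+ n.
Proof. by []. Qed.

Definition chi n (S : {set 'I_n}) (x : cube n) : R := \prod_(k in S) coord x k.

Lemma coord_mul n (x y : cube n) k :
  coord x k * coord y k = if x k == y k then 1 else -1.
Proof. by rewrite /coord; case: (x k); case: (y k) => /=; rewrite ?mulr1 ?mulrN1 ?opprK. Qed.

Lemma N_neq0 n : (2 ^+ n : R) != 0.
Proof. by rewrite expf_neq0 // pnatr_eq0. Qed.

Lemma sum_chi n (x y : cube n) :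
  \sum_(S : {set 'I_n}) chi S x * chi S y = if x == y then 2 ^+ n else 0.
Proof.
rewrite /chi.
under eq_bigr => S _ do rewrite -big_split /= big_mkcond /=.
rewrite (sum_prod_set (fun k => coord x k * coord y k) (fun _ => 1)).
case: eqP => [<-|/eqP Hxy].
  under eq_bigr => k _ do rewrite coord_mul eqxx.
  by rewrite prodr_const card_ord.
case: (pickP (fun k => x k != y k)) => [k Hk|H].
  rewrite (bigD1 k) //= coord_mul (negbTE Hk) addNr mul0r //.
case/negP: Hxy; apply/eqP/ffunP => k.
by move: (H k) => /= /negbFE /eqP.
Qed.

Lemma parseval n (g : cube n -> R) :
  \sum_(S : {set 'I_n}) fourier g S ^+ 2 = Ex (fun x => g x ^+ 2).
Proof.
rewrite /fourier !ExE.
under eq_bigr => S _ do rewrite expr_div_n.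
rewrite -mulr_suml.
have -> : \sum_(S : {set 'I_n}) (\sum_x g x * \prod_(k in S) coord x k) ^+ 2
   = \sum_x \sum_y \sum_(S : {set 'I_n}) (g x * g y) * (chi S x * chi S y).
  under eq_bigr => S _ do rewrite expr2 mulr_suml.
  rewrite exchange_big /=; apply: eq_bigr => x _.
  under eq_bigr => S _ do rewrite mulr_sumr.
  rewrite exchange_big /=; apply: eq_bigr => y _.
  by apply: eq_bigr => S _; rewrite /chi; ring.
have -> : \sum_x \sum_y \sum_(S : {set 'I_n}) (g x * g y) * (chi S x * chi S y)
   = \sum_x g x ^+ 2 * 2 ^+ n.
  apply: eq_bigr => x _.
  under eq_bigr => y _ do rewrite -mulr_sumr sum_chi.
  rewrite (bigD1 x) //= eqxx big1 ?addr0 ?expr2 //.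
  by move=> y /negbTE; rewrite eq_sym => ->; rewrite mulr0.
rewrite -mulr_suml.
have HN := N_neq0 n.
set N := (2 ^+ n : R) in HN *.
by rewrite expr2 invfM mulrA mulfK.
Qed.

Lemma flipK n (k : 'I_n) : involutive (flip k).
Proof.
move=> x; apply/ffunP => i; rewrite !ffunE.
by case: eqP => // ->; rewrite negbK.
Qed.

Lemma sum_flip n (k : 'I_n) (F : cube n -> R) :
  \sum_x F (flip k x) = \sum_x F x.
Proof. by rewrite [RHS](reindex_inj (inv_inj (@flipK n k))). Qed.

Lemma coord_flip n (k : 'I_n) x i :
  coord (flip k x) i = if i == k then - coord x i else coord x i.
Proof.
rewrite /coord ffunE; case: eqP => // _.
by case: (x i) => /=; rewrite ?opprK.
Qed.

Lemma chi_flip n (k : 'I_n) S x :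
  chi S (flip k x) = (if k \in S then -1 else 1) * chi S x.
Proof.
rewrite /chi; case: ifP => kS.
  rewrite (bigD1 k) //= [X in _ = _ * X](bigD1 k) //= coord_flip eqxx.
  rewrite mulrA mulN1r; congr (_ * _).
  by apply: eq_bigr => i /andP [_ /negbTE]; rewrite coord_flip => ->.
rewrite mul1r; apply: eq_bigr => i iS; rewrite coord_flip; case: eqP => // ik.
by move: iS; rewrite ik kS.
Qed.

Definition Dk n (k : 'I_n) (g : cube n -> R) (x : cube n) :=
  (g x - g (flip k x)) * 2^-1.

Lemma fourier_Dk n (k : 'I_n) g S :
  fourier (Dk k g) S = if k \in S then fourier g S else 0.
Proof.
rewrite /fourier !ExE /Dk.
have E : \sum_x (g (flip k x) * chi S x) = (if k \in S then -1 else 1) * \sum_x g x * chi S x.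
  rewrite mulr_sumr -[in RHS](sum_flip k); apply: eq_bigr => x _.
  by rewrite chi_flip; case: (k \in S); ring.
have -> : \sum_x (g x - g (flip k x)) * 2^-1 * \prod_(k0 in S) coord x k0
   = ((\sum_x g x * chi S x) - \sum_x (g (flip k x) * chi S x)) / 2.
  rewrite -sumrB mulr_suml; apply: eq_bigr => x _; rewrite /chi; ring.
rewrite E; case: (k \in S).
  by rewrite /chi; field; exact: N_neq0.
by rewrite mul1r subrr !mul0r.
Qed.

Lemma Dk_sq n (k : 'I_n) f x : is_boolean f ->
  Dk k f x ^+ 2 = if f x != f (flip k x) then 1 else 0.
Proof.
move=> Hf; rewrite /Dk.
case: (Hf x) => ->; case: (Hf (flip k x)) => ->; rewrite /=.
- by rewrite eqxx subrr mul0r expr0n.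
- have -> : (1 : R) != -1 by rewrite -subr_eq0 opprK (pnatr_eq0 R 2).
  by rewrite opprK; field.
- have -> : (-1 : R) != 1 by rewrite -subr_eq0 -opprD oppr_eq0 (pnatr_eq0 R 2).
  by field.
- by rewrite eqxx subrr mul0r expr0n.
Qed.

Lemma infl_fourier n (f : cube n -> R) k : is_boolean f ->
  infl f k = \sum_(S : {set 'I_n}) (if k \in S then fourier f S ^+ 2 else 0).
Proof.
move=> Hf; rewrite /infl.
rewrite ExE.
under eq_bigr => x _ do rewrite -(Dk_sq k x Hf).
rewrite -ExE -parseval; apply: eq_bigr => S _; rewrite fourier_Dk.
by case: (k \in S); rewrite ?expr0n.
Qed.

Lemma N_gt0 n : 0 < (2 ^+ n : R).
Proof. by rewrite exprn_gt0. Qed.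

Lemma Ex_norm n (g : cube n -> R) : `|Ex g| <= Ex (fun x => `|g x|).
Proof.
rewrite !ExE normrM normfV (ger0_norm (ltW (N_gt0 n))).
by rewrite ler_pM2r ?invr_gt0 ?N_gt0 // ler_norm_sum.
Qed.

Lemma Ex_le n (g h : cube n -> R) : (forall x, g x <= h x) -> Ex g <= Ex h.
Proof.
move=> H; rewrite !ExE ler_pM2r ?invr_gt0 ?N_gt0 //.
by apply: ler_sum => x _.
Qed.

Lemma Ex_add n (g h : cube n -> R) : Ex (fun x => g x + h x) = Ex g + Ex h.
Proof. by rewrite !ExE big_split /= mulrDl. Qed.

Lemma Ex1 n : Ex (fun _ : cube n => 1) = 1.
Proof.
rewrite ExE sumr_const /cube card_ffun card_bool card_ord.
by rewrite natrX divff // N_neq0.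
Qed.

Lemma parseval_bool n (f : cube n -> R) : is_boolean f ->
  \sum_(S : {set 'I_n}) fourier f S ^+ 2 = 1.
Proof.
move=> Hf; rewrite parseval -[RHS](Ex1 n); rewrite !ExE; congr (_ / _).
by apply: eq_bigr => x _; case: (Hf x) => ->; rewrite ?expr1n ?sqrrN ?expr1n.
Qed.

Lemma infl_compl n (f : cube n -> R) k : is_boolean f ->
  1 - infl f k = \sum_(S : {set 'I_n}) (if k \in S then 0 else fourier f S ^+ 2).
Proof.
move=> Hf; rewrite -(parseval_bool Hf) infl_fourier // -sumrB.
by apply: eq_bigr => S _; case: (k \in S); rewrite ?subrr ?subr0.
Qed.

Lemma infl_ge0 n (f : cube n -> R) k : 0 <= infl f k.
Proof.
rewrite /infl ExE divr_ge0 ?(ltW (N_gt0 n)) //.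
by apply: sumr_ge0 => x _; case: ifP.
Qed.

Lemma infl_le1 n (f : cube n -> R) k : infl f k <= 1.
Proof.
rewrite /infl -[X in _ <= X](Ex1 n); apply: Ex_le => x; case: ifP => _ //.
Qed.

Lemma chi_norm n S (x : cube n) : `|chi S x| = 1.
Proof.
rewrite /chi normr_prod; apply: big1 => i _.
by rewrite /coord; case: (x i); rewrite ?normrN normr1.
Qed.

Lemma fourier_norm n (g : cube n -> R) S : `|fourier g S| <= Ex (fun x => `|g x|).
Proof.
apply: le_trans (Ex_norm _) _; apply: Ex_le => x.
by rewrite normrM -/(chi S x) chi_norm mulr1.
Qed.

Lemma two_half : (1 + 1 : R) * 2^-1 = 1.
Proof. by rewrite divff // (pnatr_eq0 R 2). Qed.

Lemma fourier_set1 n (f : cube n -> R) k : is_boolean f ->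
  `|fourier f [set k]| <= infl f k.
Proof.
move=> Hf.
have -> : fourier f [set k] = fourier (Dk k f) [set k] by rewrite fourier_Dk set11.
apply: le_trans (fourier_norm _ _) _; rewrite /infl; apply: Ex_le => x.
rewrite -(Dk_sq k x Hf).
suff : `|Dk k f x| = Dk k f x ^+ 2 by move=> ->.
rewrite /Dk; case: (Hf x) => ->; case: (Hf (flip k x)) => ->.
- by rewrite subrr mul0r normr0 expr0n.
- by rewrite opprK two_half normr1 expr1n.
- by rewrite -opprD mulNr two_half normrN1 sqrrN expr1n.
- by rewrite subrr mul0r normr0 expr0n.
Qed.

Lemma fourier_set0 n (f : cube n -> R) k : is_boolean f ->
  `|fourier f set0| <= 1 - infl f k.
Proof.
move=> Hf.
have -> : fourier f set0 = Ex (fun x => (f x + f (flip k x)) * 2^-1).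
  rewrite /fourier !ExE; congr (_ / _).
  under eq_bigr => x _ do rewrite big_set0 mulr1.
  rewrite -mulr_suml big_split /= sum_flip.
  by rewrite -mulr2n -[_ *+ 2]mulr_natr mulfK // (pnatr_eq0 R 2).
apply: le_trans (Ex_norm _) _.
have -> : 1 - infl f k = Ex (fun x => if f x != f (flip k x) then 0 else 1).
  rewrite -[X in X - _](Ex1 n) /infl; apply/eqP; rewrite subr_eq -Ex_add !ExE.
  apply/eqP; congr (_ / _); apply: eq_bigr => x _.
  by case: ifP => _; rewrite ?add0r ?addr0.
apply: Ex_le => x.
case: (Hf x) => ->; case: (Hf (flip k x)) => ->.
- by rewrite eqxx /= two_half normr1.
- rewrite addrN mul0r normr0; case: ifP => // _; exact: ler01.
- rewrite addNr mul0r normr0; case: ifP => // _; exact: ler01.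
- by rewrite eqxx /= -opprD mulNr two_half normrN1.
Qed.

Lemma lnM (x y : R) : 0 < x -> 0 < y -> ln (x * y) = ln x + ln y.
Proof. by move=> /RltP hx /RltP hy; rewrite ln_mult. Qed.

Lemma lnV (x : R) : 0 < x -> ln (x^-1) = - ln x.
Proof. by move=> /RltP hx; exact: ln_Rinv. Qed.

Lemma ln1 : ln 1 = 0.
Proof. exact: ln_1. Qed.

Lemma ln_le (x y : R) : 0 < x -> x <= y -> ln x <= ln y.
Proof.
move=> hx; rewrite le_eqVlt => /orP [/eqP -> //|hxy].
by apply/ltW/RltP; apply: ln_increasing; apply/RltP.
Qed.

Lemma ln_sub1 (x : R) : 0 < x -> ln x <= x - 1.
Proof.
move=> hx; have h : 1 + ln x <= x.
  apply/RleP; have := exp_ineq1_le (ln x); rewrite exp_ln //; exact/RltP.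
lra.
Qed.

Lemma ln_ge0 (x : R) : 1 <= x -> 0 <= ln x.
Proof. by move=> h; rewrite -ln1; apply: ln_le. Qed.

Lemma ln2_ge : 2^-1 <= ln 2.
Proof.
have h := ln_sub1 (x := 2^-1) (ltac:(by rewrite invr_gt0 ltr0n)).
rewrite lnV ?ltr0n // in h.
have : (2^-1 : R) - 1 = - 2^-1.
  by apply: (mulfI (x := 2)); rewrite ?(pnatr_eq0 R 2) // mulrBr mulrN divff ?(pnatr_eq0 R 2) //; ring.
by move=> e; rewrite e lerN2 in h.
Qed.

Lemma two_eq : IZR 2 = 2 :> R. Proof. by []. Qed.

Lemma sum_ge_term (I : finType) (F : I -> R) i :
  (forall j, 0 <= F j) -> F i <= \sum_j F j.
Proof. by move=> H; rewrite (bigD1 i) //= lerDl sumr_ge0. Qed.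

Lemma ln_prod (I : finType) (a : I -> R) : (forall k, 0 < a k) ->
  ln (\prod_k a k) = \sum_k ln (a k).
Proof.
move=> H.
suff : 0 < \prod_k a k /\ ln (\prod_k a k) = \sum_k ln (a k) by case.
apply: (big_rec2 (fun s t => 0 < t /\ ln t = s)).
  by split; [exact: ltr01 | exact: ln1].
move=> k s t _ [ht hl]; split; first by rewrite mulr_gt0.
by rewrite lnM // hl.
Qed.

Lemma ln_inv1 (x : R) : 0 < x -> ln (1 / x) = - ln x.
Proof.
move=> hx; transitivity (ln (x^-1)); last exact: lnV.
congr ln; exact: Rmult_1_l.
Qed.

Lemma gibbs_term (p q L : R) : 0 <= p -> 0 <= q ->
  (0 < p -> 0 < q /\ ln q = - L) ->
  (if p == 0 then 0 else p * ln (1 / p)) <= p * L + q - p.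
Proof.
move=> hp hq H; case: eqP => [->|/eqP pn0].
  by rewrite mul0r add0r subr0.
have pp : 0 < p by rewrite lt_def pn0.
case: (H pp) => qp lq.
have hL : L = - ln q by rewrite lq opprK.
have := ln_sub1 (x := q / p) (ltac:(by rewrite divr_gt0)).
rewrite lnM ?invr_gt0 // lnV // ln_inv1 // hL => h.
have h2 : p * (ln q - ln p) <= p * (q / p - 1) by rewrite ler_pM2l.
have e : p * (q / p - 1) = q - p by field.
rewrite e in h2.
lra.
Qed.

Definition pq n (f : cube n -> R) (S : {set 'I_n}) := fourier f S ^+ 2.
Definition aq n (f : cube n -> R) (k : 'I_n) := infl f k.

Lemma p_ge0 n (f : cube n -> R) (S : {set 'I_n}) : 0 <= pq f S.
Proof. exact: sqr_ge0. Qed.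

Lemma p_le_a n (f : cube n -> R) (Hf : is_boolean f) (S : {set 'I_n}) (k : 'I_n) : k \in S -> pq f S <= aq f k.
Proof.
move=> kS; rewrite /aq infl_fourier //.
have := @sum_ge_term _ (fun T : {set 'I_n} => if k \in T then pq f T else 0) S.
by rewrite kS; apply => T; case: ifP => _ //; exact: p_ge0.
Qed.

Lemma p_le_1a n (f : cube n -> R) (Hf : is_boolean f) (S : {set 'I_n}) (k : 'I_n) : k \notin S -> pq f S <= 1 - aq f k.
Proof.
move=> kS; rewrite /aq infl_compl //.
have := @sum_ge_term _ (fun T : {set 'I_n} => if k \in T then 0 else pq f T) S.
by rewrite (negbTE kS); apply => T; case: ifP => _ //; exact: p_ge0.
Qed.

Definition LL n (f : cube n -> R) (S : {set 'I_n}) :=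
  \sum_k (if k \in S then ln (1 / aq f k) else ln (1 / (1 - aq f k))).
Definition qq n (f : cube n -> R) (S : {set 'I_n}) :=
  \prod_k (if k \in S then aq f k else 1 - aq f k).

Lemma ent_gibbs n (f : cube n -> R) (Hf : is_boolean f) :
  \sum_S (if pq f S == 0 then 0 else pq f S * ln (1 / pq f S)) <= \sum_S pq f S * LL f S.
Proof.
have H : forall S, (if pq f S == 0 then 0 else pq f S * ln (1 / pq f S)) <= pq f S * LL f S + qq f S - pq f S.
  move=> S; apply: gibbs_term; first exact: p_ge0.
    apply: prodr_ge0 => k _; case: ifP => _; rewrite /aq ?subr_ge0 ?infl_ge0 ?infl_le1 //.
  move=> pp.
  have fpos : forall k, 0 < (if k \in S then aq f k else 1 - aq f k).
    move=> k; case: ifP => kS.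
      exact: lt_le_trans pp (p_le_a Hf kS).
    exact: lt_le_trans pp (p_le_1a Hf (negbT kS)).
  split; first by apply: prodr_gt0 => k _; exact: fpos.
  rewrite /qq ln_prod // /LL -sumrN; apply: eq_bigr => k _.
  have := fpos k; case: ifP => _ h; by rewrite ln_inv1 // opprK.
apply: le_trans (ler_sum _ (fun S _ => H S)) _.
rewrite sumrB big_split /= /qq sum_prod_set.
have -> : \prod_k (aq f k + (1 - aq f k)) = 1.
  by apply: big1 => k _; rewrite addrC subrK.
by rewrite parseval_bool // addrK.
Qed.

Lemma ent_sum n (f : cube n -> R) (Hf : is_boolean f) :
  \sum_S pq f S * LL f S = \sum_k (aq f k * ln (1 / aq f k) + (1 - aq f k) * ln (1 / (1 - aq f k))).
Proof.
rewrite /LL; under eq_bigr => S _ do rewrite mulr_sumr.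
rewrite exchange_big /=; apply: eq_bigr => k _.
rewrite /aq infl_compl // infl_fourier // !mulr_suml -big_split /=.
by apply: eq_bigr => S _; case: ifP => _; rewrite ?mul0r ?add0r ?addr0 mulrC.
Qed.



Lemma one_minus_term (t : R) : 0 <= t -> t <= 1 ->
  (1 - t) * ln (1 / (1 - t)) <= t.
Proof.
move=> h0 h1; set u := 1 - t.
have u0 : 0 <= u by rewrite /u subr_ge0.
case: (eqVneq u 0) => [->|un0]; first by rewrite mul0r.
have up : 0 < u by rewrite lt_def un0.
rewrite ln_inv1 //.
have h := ln_sub1 (x := u^-1) (ltac:(by rewrite invr_gt0)).
rewrite lnV // in h.
have h2 : u * - ln u <= u * (u^-1 - 1) by rewrite ler_pM2l.
have e : u * (u^-1 - 1) = 1 - u by field.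
rewrite e in h2; rewrite /u in h2 *; lra.
Qed.

Lemma xlog_ln (t : R) : xlog1x t = t * ln (1 / t) * (ln 2)^-1.
Proof.
rewrite /xlog1x /log2; case: eqP => [->|_]; first by rewrite !mul0r.
by rewrite mulrA.
Qed.

Lemma ent_ln n (f : cube n -> R) :
  fourier_ent f = (\sum_S (if fourier f S ^+ 2 == 0 then 0
       else fourier f S ^+ 2 * ln (1 / fourier f S ^+ 2))) * (ln 2)^-1.
Proof.
rewrite /fourier_ent mulr_suml; apply: eq_bigr => S _.
rewrite sqrf_eq0; case: eqP => _; first by rewrite mul0r.
by rewrite /log2 mulrA.
Qed.

Lemma ln2_gt0 : 0 < ln 2.
Proof. apply: lt_le_trans ln2_ge; by rewrite invr_gt0 ltr0n. Qed.

Lemma ent_bound n (f : cube n -> R) : is_boolean f ->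
  fourier_ent f <= \sum_k xlog1x (infl f k) + total_infl f * (ln 2)^-1.
Proof.
move=> Hf; rewrite ent_ln.
have H := ent_gibbs Hf; rewrite (ent_sum Hf) in H.
have il := ln2_gt0.
apply: le_trans (_ : (\sum_k (infl f k * ln (1 / infl f k) + infl f k)) * (ln 2)^-1 <= _).
  rewrite ler_pM2r ?invr_gt0 //; apply: le_trans H _.
  apply: ler_sum => k _; rewrite lerD2l; apply: one_minus_term.
    exact: infl_ge0.
  exact: infl_le1.
rewrite /total_infl big_split /= mulrDl lerD2r mulr_suml.
by apply: ler_sum => k _; rewrite xlog_ln.
Qed.

Lemma sq_le (x b : R) : `|x| <= b -> x ^+ 2 <= b ^+ 2.
Proof.
move=> h; rewrite -(real_normK (num_real x)) !expr2.
by apply: ler_pM => //; exact: normr_ge0.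
Qed.

Lemma exists_pos m (S : {set 'I_m.+1}) :
  S != set0 -> S != [set ord0] -> exists2 k : 'I_m.+1, k \in S & (0 < k)%N.
Proof.
move=> h0 h1.
case: (pickP (fun k : 'I_m.+1 => (k \in S) && (0 < k)%N)) => [k /andP [] *|H].
  by exists k.
have : S \subset [set ord0].
  apply/subsetP => k kS; rewrite inE; have := H k; rewrite kS /= => /negbT.
  rewrite -leqNgt leqn0 => /eqP e; apply/eqP/val_inj; exact: e.
by rewrite subset1 (negbTE h0) (negbTE h1).
Qed.

Lemma T_bound m (f : cube m.+1 -> R) : is_boolean f ->
  2 * infl f ord0 * (1 - infl f ord0) <= \sum_(k : 'I_m.+1 | (0 < k)%N) infl f k.
Proof.
move=> Hf; set mu := infl f ord0.
set p := fun S : {set 'I_m.+1} => fourier f S ^+ 2.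
have p0 : forall S, 0 <= p S by move=> S; exact: sqr_ge0.
have hne : [set ord0] != set0 :> {set 'I_m.+1}.
  by apply/set0Pn; exists ord0; rewrite set11.
have P1 := parseval_bool Hf.
rewrite (bigD1 set0) //= (bigD1 [set ord0]) //= in P1.
have e0 : p set0 <= (1 - mu) ^+ 2 by apply: sq_le; exact: fourier_set0.
have e1 : p [set ord0] <= mu ^+ 2 by apply: sq_le; exact: fourier_set1.
set R0 := \sum_(S | (S != set0) && (S != [set ord0])) fourier f S ^+ 2 in P1.
have HT : R0 <= \sum_(k : 'I_m.+1 | (0 < k)%N) infl f k.
  under eq_bigr => k _ do rewrite infl_fourier //.
  rewrite exchange_big /=.
  rewrite (bigID (fun S : {set 'I_m.+1} => (S != set0) && (S != [set ord0]))) /=.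
  rewrite -[R0]addr0; apply: lerD.
    apply: ler_sum => S /andP [h0 h1].
    have [k kS kp] := exists_pos h0 h1.
    rewrite (bigD1 k) //= kS lerDl; apply: sumr_ge0 => j _; case: ifP => _ //; exact: p0.
  apply: sumr_ge0 => S _; apply: sumr_ge0 => j _; case: ifP => _ //; exact: p0.
have : 1 - p set0 - p [set ord0] <= \sum_(k : 'I_m.+1 | (0 < k)%N) infl f k.
  apply: le_trans HT; rewrite -P1 /p; lra.
move: e0 e1; rewrite /p => e0 e1 h.
nra.
Qed.

Lemma phi_ge0 (t : R) : 0 <= t -> t <= 1 -> 0 <= t * ln (1 / t).
Proof.
move=> h0 h1; case: (eqVneq t 0) => [->|tn0]; first by rewrite mul0r.
have tp : 0 < t by rewrite lt_def tn0.
rewrite ln_inv1 // mulrN oppr_ge0 pmulr_rle0 //.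
by rewrite -ln1; apply: ln_le.
Qed.

Lemma xlog_ge0 (t : R) : 0 <= t -> t <= 1 -> 0 <= xlog1x t.
Proof.
move=> h0 h1; rewrite xlog_ln mulr_ge0 ?phi_ge0 //.
by rewrite invr_ge0 ltW // ln2_gt0.
Qed.

Lemma phi_mono (mu t : R) : 0 <= mu -> mu <= t -> t <= 1 ->
  mu * ln (1 / mu) <= t * ln (1 / t) + t.
Proof.
move=> h0 h1 h2; case: (eqVneq mu 0) => [->|mn0].
  rewrite mul0r; apply: addr_ge0; last by apply: le_trans h1.
  by apply: phi_ge0 => //; apply: le_trans h1.
have mp : 0 < mu by rewrite lt_def mn0.
have tp : 0 < t by apply: lt_le_trans h1.
rewrite !ln_inv1 //.
have A : ln t <= 0 by rewrite -ln1; apply: ln_le.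
have h := ln_sub1 (x := t / mu) (ltac:(by rewrite divr_gt0)).
rewrite lnM ?invr_gt0 // lnV // in h.
have h3 : mu * (ln t - ln mu) <= mu * (t / mu - 1) by rewrite ler_pM2l.
have e : mu * (t / mu - 1) = t - mu by field.
rewrite e in h3.
nra.
Qed.

Lemma phi_lower (t mu : R) : 0 <= t -> t <= mu -> mu <= 1 ->
  t * ln (1 / mu) <= t * ln (1 / t).
Proof.
move=> h0 h1 h2; case: (eqVneq t 0) => [->|tn0]; first by rewrite !mul0r.
have tp : 0 < t by rewrite lt_def tn0.
have mp : 0 < mu by apply: lt_le_trans h1.
rewrite ler_pM2l // !ln_inv1 // lerN2; exact: ln_le.
Qed.

Lemma k0_bound m (f : cube m.+1 -> R) : is_boolean f ->
  xlog1x (infl f ord0) <=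
   \sum_(k : 'I_m.+1 | (0 < k)%N) xlog1x (infl f k)
   + total_infl f * (ln 2)^-1 + total_infl f.
Proof.
move=> Hf; set mu := infl f ord0.
set X := \sum_(k : 'I_m.+1 | (0 < k)%N) xlog1x (infl f k).
set I := total_infl f.
have iota0 : 0 < (ln 2)^-1 by rewrite invr_gt0 ln2_gt0.
have X0 : 0 <= X by apply: sumr_ge0 => k _; apply: xlog_ge0; [exact: infl_ge0|exact: infl_le1].
have I0 : 0 <= I by apply: sumr_ge0 => k _; exact: infl_ge0.
have Imu : mu <= I.
  by apply: (@sum_ge_term _ (fun k => infl f k)) => k; exact: infl_ge0.
have mu0 : 0 <= mu by exact: infl_ge0.
have mu1 : mu <= 1 by exact: infl_le1.
have th := two_half.
have Iiota : 0 <= I * (ln 2)^-1 by rewrite mulr_ge0 // ltW.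
case: (eqVneq mu 0) => [e|mun0].
  rewrite e /xlog1x eqxx; lra.
have mup : 0 < mu by rewrite lt_def mun0.
rewrite xlog_ln.
case: (leP (2^-1) mu) => hmu.
  have hl : ln (1 / mu) <= ln 2.
    rewrite ln_inv1 // -lnV //; apply: ln_le; first by rewrite invr_gt0.
    have e : mu^-1 * (2 * mu) = 2 by field.
    rewrite two_eq -e -[X in X <= _]mulr1 ler_pM2l ?invr_gt0 //; lra.
  have : mu * ln (1 / mu) * (ln 2)^-1 <= mu * ln 2 * (ln 2)^-1.
    by rewrite ler_pM2r // ler_pM2l.
  have e2 : mu * ln 2 * (ln 2)^-1 = mu by rewrite -mulrA mulfV ?mulr1 // gt_eqF // ln2_gt0.
  rewrite e2 => h; lra.
have HT := T_bound Hf; rewrite -/mu in HT.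
set T := \sum_(k : 'I_m.+1 | (0 < k)%N) infl f k in HT.
have Tmu : mu <= T by nra.
case: (pickP (fun k : 'I_m.+1 => (0 < k)%N && (mu <= infl f k))) => [k /andP [kp hk]|H].
  have h := phi_mono mu0 hk (infl_le1 f k).
  have h2 : mu * ln (1 / mu) * (ln 2)^-1 <=
       (infl f k * ln (1 / infl f k) + infl f k) * (ln 2)^-1 by rewrite ler_pM2r.
  rewrite mulrDl -(xlog_ln (infl f k)) in h2.
  have hX : xlog1x (infl f k) <= X.
    rewrite /X (bigD1 k) //= lerDl; apply: sumr_ge0 => j _.
    apply: xlog_ge0; [exact: infl_ge0|exact: infl_le1].
  have hI : infl f k <= I.
    by apply: (@sum_ge_term _ (fun k => infl f k)) => j; exact: infl_ge0.
  have : infl f k * (ln 2)^-1 <= I * (ln 2)^-1 by rewrite ler_pM2r.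
  lra.
have hlt : forall k : 'I_m.+1, (0 < k)%N -> infl f k <= mu.
  move=> k kp; have := H k; rewrite kp /= => /negbT; rewrite -ltNge => /ltW //.
have lnm : 0 <= ln (1 / mu) by rewrite ln_inv1 // oppr_ge0 -ln1; apply: ln_le.
have hS : T * ln (1 / mu) <= \sum_(k : 'I_m.+1 | (0 < k)%N) infl f k * ln (1 / infl f k).
  rewrite /T mulr_suml; apply: ler_sum => k kp.
  by apply: phi_lower => //; [exact: infl_ge0 | exact: hlt].
have : mu * ln (1 / mu) <= \sum_(k : 'I_m.+1 | (0 < k)%N) infl f k * ln (1 / infl f k).
  apply: le_trans hS; nra.
move=> h.
have hX : mu * ln (1 / mu) * (ln 2)^-1 <= X.
  rewrite /X; under eq_bigr => k _ do rewrite xlog_ln.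
  by rewrite -mulr_suml ler_pM2r.
lra.
Qed.

Lemma iota_le2 : (ln 2)^-1 <= 2.
Proof.
have h := ln2_ge; have hp := ln2_gt0.
have e : (ln 2)^-1 * (2 * ln 2) = 2.
  by field; rewrite gt_eqF.
have h1 : 1 <= 2 * ln 2.
  have : 2 * 2^-1 <= 2 * ln 2 by rewrite ler_pM2l ?ltr0n.
  by rewrite divff // (pnatr_eq0 R 2).
rewrite -e -[X in X <= _]mulr1 ler_pM2l // invr_gt0 //.
Qed.

Theorem mainTheorem3 :
  exists c1 c2 : R, 0 < c1 /\ 0 < c2 /\
    forall (n : nat) (f : cube n -> R),
      (0 < n)%N -> is_boolean f ->
      fourier_ent f <=
        c1 * total_infl f + c2 * \sum_(k : 'I_n | (0 < k)%N) xlog1x (infl f k).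
Proof.
exists 5, 2; split; first by rewrite ltr0n.
split; first by rewrite ltr0n.
move=> [|m] f // _ Hf.
have E := ent_bound Hf.
rewrite (bigD1 ord0) //= in E.
have e : \sum_(k : 'I_m.+1 | k != ord0) xlog1x (infl f k)
   = \sum_(k : 'I_m.+1 | (0 < k)%N) xlog1x (infl f k).
  by apply: eq_bigl => k; rewrite lt0n.
rewrite e in E.
have K := k0_bound Hf.
have I0 : 0 <= total_infl f by apply: sumr_ge0 => k _; exact: infl_ge0.
have i2 := iota_le2.
have : total_infl f * (ln 2)^-1 <= total_infl f * 2 by rewrite ler_wpM2l.
lra.
Qed.
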